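(* Let $A\in N_C$ be a concept name, let $E,F,G$ be regular role expressions, and let $C_0$ be an $\mathcal{FL}_{\bot\mathit{reg}}$ concept description. (1) If $C_0$ does not contain $\bot$ and does not contain the concept name $A$, then $\forall E.A\sqcap\forall F.\bot\sqcap C_0\sqsubseteq\forall G.A$ holds if and only if $\forall E.A\sqcap\forall F.\bot\sqsubseteq\forall G.A$ holds. (2) If $C_0$ does not contain $\bot$, then $\forall F.\bot\sqcap C_0\sqsubseteq\forall G.\bot$ holds if and only if $\forall F.\bot\sqsubseteq\forall G.\bot$ holds. Here a subsumption $X\sqsubseteq Y$ ''holds'' means $X^{\mathcal I}\subseteq Y^{\mathcal I}$ for every interpretation $\mathcal I$.
   Context: Let $N_C$ and $N_R$ be disjoint countably infinite sets of concept names and role names. Regular role expressions are generated by $E ::= \emptyset \mid \varepsilon \mid r \mid (E+E) \mid (EE) \mid E^{*}$ with $r\in N_R$, with languages $\mathcal L(E)\subseteq N_R^*$ defined as usual. $\mathcal{FL}_{\bot\mathit{reg}}$ concept descriptions are generated by $C ::= A \mid \top \mid \bot \mid (C\sqcap C) \mid \forall E.C$ with $A\in N_C$. An interpretation $\mathcal I=(\Delta^{\mathcal I},\cdot^{\mathcal I})$ has nonempty domain, $A^{\mathcal I}\subseteq\Delta^{\mathcal I}$, $r^{\mathcal I}\subseteq(\Delta^{\mathcal I})^2$; $E^{\mathcal I}$ is the union over words $r_1\cdots r_n\in\mathcal L(E)$ of $r_1^{\mathcal I}\circ\cdots\circ r_n^{\mathcal I}$ (identity for the empty word); $\top^{\mathcal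 I}=\Delta^{\mathcal I}$, $\bot^{\mathcal I}=\emptyset$, $(C\sqcap D)^{\mathcal I}=C^{\mathcal I}\cap D^{\mathcal I}$, $(\forall E.C)^{\mathcal I}=\{x\mid y\in C^{\mathcal I}$ for all $y$ with $(x,y)\in E^{\mathcal I}\}$. *)

(* Defs.v *)
From Stdlib Require Import List.
Import ListNotations.

Definition cname := nat.
Definition rname := nat.

Inductive rexp : Type :=
| REmpty : rexp
| REps : rexp
| RRole : rname -> rexp
| RPlus : rexp -> rexp -> rexp
| RConc : rexp -> rexp -> rexp
| RStar : rexp -> rexp.

Inductive lang : rexp -> list rname -> Prop :=
| L_eps : lang REps []
| L_role : forall r, lang (RRole r) [r]
| L_plusl : forall E F w, lang E w -> lang (RPlus E F) w
| L_plusr : forall E F w, lang F w -> lang (RPlus E F) w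
| L_conc : forall E F u v, lang E u -> lang F v -> lang (RConc E F) (u ++ v)
| L_star0 : forall E, lang (RStar E) []
| L_starS : forall E u v, lang E u -> lang (RStar E) v -> lang (RStar E) (u ++ v).

Inductive concept : Type :=
| CName : cname -> concept
| CTop : concept
| CBot : concept
| CAnd : concept -> concept -> concept
| CAll : rexp -> concept -> concept.

Record interp : Type := {
  dom : Type;
  dom_inhabited : dom;
  iconc : cname -> dom -> Prop;
  irole : rname -> dom -> dom -> Prop
}.

Fixpoint word_rel (I : interp) (w : list rname) : dom I -> dom I -> Prop :=
  match w with
  | [] => fun x y => x = y
  | r :: w' => fun x y => exists z, irole I r x z /\ word_rel I w' z y
  end.

Definition rexp_rel (I : interp) (E : rexp) (x y : dom I) : Prop :=
  exists w, lang E w /\ word_rel I w x y.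

Fixpoint cinterp (I : interp) (C : concept) : dom I -> Prop :=
  match C with
  | CName A => iconc I A
  | CTop => fun _ => True
  | CBot => fun _ => False
  | CAnd C D => fun x => cinterp I C x /\ cinterp I D x
  | CAll E C => fun x => forall y, rexp_rel I E x y -> cinterp I C y
  end.

Definition subsumed (C D : concept) : Prop :=
  forall I : interp, forall x : dom I, cinterp I C x -> cinterp I D x.

Fixpoint contains_bot (C : concept) : bool :=
  match C with
  | CBot => true
  | CName _ | CTop => false
  | CAnd C D => contains_bot C || contains_bot D
  | CAll _ C => contains_bot C
  end.

Fixpoint contains_name (A : cname) (C : concept) : bool :=
  match C with
  | CName B => Nat.eqb A B
  | CTop | CBot => false
  | CAnd C D => contains_name A C || contains_name A D
  | CAll _ C => contains_name A C
  end.

(* Main.v *)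
Require Import Defs.
From Stdlib Require Import List Bool Arith.

Definition modI (A : cname) (I : interp) : interp :=
  {| dom := dom I; dom_inhabited := dom_inhabited I;
     iconc := fun B y => if Nat.eqb A B then iconc I A y else True;
     irole := irole I |}.

Definition topI (I : interp) : interp :=
  {| dom := dom I; dom_inhabited := dom_inhabited I;
     iconc := fun _ _ => True; irole := irole I |}.

Lemma word_same (I1 I2 : interp) (e : dom I1 = dom I2) : False -> True.
Proof. auto. Qed.

Lemma word_modI A J w x y : word_rel J w x y <-> word_rel (modI A J) w x y.
Proof.
  revert x; induction w; simpl; intros x; [tauto|].
  split; intros [z [H1 H2]]; exists z; split; auto; apply IHw; auto.
Qed.

Lemma word_topI J w x y : word_rel J w x y <-> word_rel (topI J) w x y.
Proof.
  revert x; induction w; simpl; intros x; [tauto|].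
  split; intros [z [H1 H2]]; exists z; split; auto; apply IHw; auto.
Qed.

Lemma rexp_modI A J E x y : rexp_rel J E x y <-> rexp_rel (modI A J) E x y.
Proof.
  unfold rexp_rel; split; intros [w [H1 H2]]; exists w; split; auto;
  apply (word_modI A J w x y); auto.
Qed.

Lemma rexp_topI J E x y : rexp_rel J E x y <-> rexp_rel (topI J) E x y.
Proof.
  unfold rexp_rel; split; intros [w [H1 H2]]; exists w; split; auto;
  apply (word_topI J w x y); auto.
Qed.

Lemma modI_true A J C : contains_bot C = false -> contains_name A C = false ->
  forall y, cinterp (modI A J) C y.
Proof.
  induction C; simpl; intros Hb Hn y; try discriminate; auto.
  - rewrite Hn; exact Logic.I.
  - apply orb_false_iff in Hb, Hn. destruct Hb, Hn. split; auto.
Qed.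

Lemma topI_true I C : contains_bot C = false -> forall y, cinterp (topI I) C y.
Proof.
  induction C; simpl; intros Hb y; try discriminate; auto.
  apply orb_false_iff in Hb. destruct Hb. split; auto.
Qed.

Theorem lemma1 (A : cname) (E F G : rexp) (C0 : concept) :
  (contains_bot C0 = false -> contains_name A C0 = false ->
    (subsumed (CAnd (CAnd (CAll E (CName A)) (CAll F CBot)) C0) (CAll G (CName A))
     <-> subsumed (CAnd (CAll E (CName A)) (CAll F CBot)) (CAll G (CName A))))
  /\
  (contains_bot C0 = false ->
    (subsumed (CAnd (CAll F CBot) C0) (CAll G CBot)
     <-> subsumed (CAll F CBot) (CAll G CBot))).
Proof.
  split.
  - intros Hb Hn; split; intros H I0 x Hx.
    + destruct Hx as [HE HF].
      pose proof (H (modI A I0) x) as K. simpl in K.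
      rewrite Nat.eqb_refl in K.
      intros y Hy. refine (K _ y (proj1 (rexp_modI A I0 G x y) Hy)). split; [split|].
      * intros z Hz; exact (HE z (proj2 (rexp_modI A I0 E x z) Hz)).
      * intros z Hz; exact (HF z (proj2 (rexp_modI A I0 F x z) Hz)).
      * apply modI_true; assumption.
    + apply H. apply Hx.
  - intros Hb; split; intros H I0 x Hx.
    + pose proof (H (topI I0) x) as K. simpl in K.
      intros y Hy. refine (K _ y (proj1 (rexp_topI I0 G x y) Hy)). split.
      * intros z Hz; exact (Hx z (proj2 (rexp_topI I0 F x z) Hz)).
      * apply topI_true; assumption.
    + apply H. apply Hx.
Qed.
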